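(* Suppose the smallest directed sub-block of $D$ has $n$ nodes. Then for every $x\in\mathbb{N}$ with $x<n-2$, every state in $M_{C(x)}$ is on at most two nodes, $M_{C(x)}=M_{C(0)}$, and the order-$x$ cycle-partitioning closed model coincides with the pair-level ($x=0$) model.
   Context: $D=(V,A)$ is a directed graph on $V=\{1,\dots,N\}$ with rates $T_{ij}\ge0$, $T_{ij}>0$ iff $(j,i)\in A$, $T_{ii}=0$. A subsystem state is $\psi^A_W$ with $W\subseteq V$ nonempty, $A:W\to\{S,I,R\}$; $S_i,I_i$ are single-node states; for $n\notin W$, $\psi^A_WI_n$ is the state on $W\cup\{n\}$ extending $A$ with $n$ in state $I$; $h^X_k(\psi^A_W)$ changes the state of $k\in W$ to $X$. $\mathrm{IN}_a(X)$ is the set of nodes that can reach some member of $X$ by traversing at most $a$ arcs. $f_{C(x)}(X,Y,i)=1$ iff $\mathrm{IN}_a(X)\cap\mathrm{IN}_b(Y)=\emptyset$ in $D-i$ for all $a,b\in\mathbb{N}$ with $a+b=x$, else $0$, and by convention $0$ when the second argument is empty. A state $\psi^A_W$ with $A:W\to\{S,I\}$ induces: $\psi^A_W$; $h^S_k(\psi^A_W)$ for $k\in W$ with $A_k=I$ and $T_{kn}>0$ for some $n\in W$ with $A_n=I$; and for each $k\in W$, $n\in V\setminus W$ with $T_{kn}>0$: the state $h^S_k(\psi^A_W)I_n$ if $f_{C(x)}(\{n\},W\setminus\{k\},\{k\})=0$, or the states $h^S_k(\psi^A_W)$, $S_kI_n$, $S_k$ if it equals $1$. $M_{C(x)}$ is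 the smallest set containing all $S_i,I_i$ and closed under induced states. The closed model of order $x$ is the ODE system, one equation per state in $M_{C(x)}$, obtained from the exact Markovian SIR moment equation for $\langle\psi^A_W\rangle$ by replacing $\langle h^S_k(\psi^A_W)I_n\rangle$ with $\langle h^S_k(\psi^A_W)\rangle\langle S_kI_n\rangle/\langle S_k\rangle$ whenever $f_{C(x)}(\{n\},W\setminus\{k\},\{k\})=1$. $D[W]$ is the induced subgraph. A graph is biconnected if it has at least three vertices, is connected and remains connected after deleting any vertex. $D[W]$ is a directed sub-block if some node of $W$ is reachable within $D[W]$ from all others and its underlying undirected graph is biconnected. *)

(* Defs.v *)
From HB Require Import structures.
From mathcomp Require Import all_boot all_order all_algebra.
Set Implicit Arguments. Unset Strict Implicit. Unset Printing Implicit Defensive.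
Import Order.TTheory GRing.Theory Num.Theory.

Inductive SIR := S_st | I_st | R_st.
Definition SIR_eqb (a b : SIR) :=
  match a, b with S_st, S_st | I_st, I_st | R_st, R_st => true | _, _ => false end.
Lemma SIR_eqP : Equality.axiom SIR_eqb.
Proof. by case; case; constructor. Qed.
HB.instance Definition _ := hasDecEq.Build SIR SIR_eqP.

Section Model.
Variables (R : realFieldType) (N : nat).
Local Notation V := 'I_N.
(* T i j = rate at which j infects i; arc (j,i) in A iff T i j > 0. *)
Variable T : V -> V -> R.
(* recovery rates *)
Variable gam : V -> R.

Local Open Scope ring_scope.

Definition arc (u v : V) : bool := 0 < T v u.

(* A subsystem state psi^A_W: W = support, A = values on W. *)
Definition state := {ffun V -> option SIR}.
Definition supp (psi : state) : {set V} := [set i | psi i != None].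

Definition hset (X : SIR) (k : V) (psi : state) : state :=
  [ffun j => if j == k then Some X else psi j].
Definition single (X : SIR) (i : V) : state :=
  [ffun j => if j == i then Some X else None].
Definition addI (psi : state) (n : V) : state := hset I_st n psi.

Fixpoint INs (Z : {set V}) (a : nat) (X : {set V}) : {set V} :=
  match a with
  | 0%N => X :\: Z
  | a'.+1 => INs Z a' X :|:
             [set u | (u \notin Z) && [exists v in INs Z a' X, arc u v]]
  end.

Definition fC (x : nat) (X Y Z : {set V}) : bool :=
  (Y != set0) &&
  [forall a : 'I_x.+1, INs Z a X :&: INs Z (x - a) Y == set0].

Definition SI_state (psi : state) : bool :=
  [forall i, psi i \in [:: None; Some S_st; Some I_st]].

Definition induced (x : nat) (psi phi : state) : Prop :=
  SI_state psi /\
  [\/ phi = psi,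
      exists k n, [/\ psi k = Some I_st, psi n = Some I_st, 0 < T k n &
                      phi = hset S_st k psi]
    | exists k n, [/\ k \in supp psi, n \notin supp psi, 0 < T k n &
        if fC x [set n] (supp psi :\ k) [set k]
        then phi = hset S_st k psi \/ phi = addI (single S_st k) n
             \/ phi = single S_st k
        else phi = addI (hset S_st k psi) n]].

Inductive MC (x : nat) : state -> Prop :=
  | MC_S i : MC x (single S_st i)
  | MC_I i : MC x (single I_st i)
  | MC_step psi phi : MC x psi -> induced x psi phi -> MC x phi.

(* term standing for <h^S_k(psi) I_n> in the closed model of order x *)
Definition closed_term (x : nat) (psi : state) (k n : V) (y : state -> R) : R :=
  if fC x [set n] (supp psi :\ k) [set k]
  then y (hset S_st k psi) * y (addI (single S_st k) n) / y (single S_st k)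
  else y (addI (hset S_st k psi) n).

(* Right-hand side of the equation for <psi> in the closed model of order x,
   obtained from the exact Markovian SIR moment equation
   d<psi>/dt = sum_{k: A_k = I} [ sum_{n in W, A_n = I} T_kn <h^S_k psi>
                                 + sum_{n notin W} T_kn <h^S_k(psi) I_n> - gam_k <psi> ]
             - sum_{k: A_k = S} [ sum_{n in W, A_n = I} T_kn <psi>
                                 + sum_{n notin W} T_kn <psi I_n> ]
             + sum_{k: A_k = R} gam_k <h^I_k psi>
   by the closure substitution. *)
Definition closed_rhs (x : nat) (psi : state) (y : state -> R) : R :=
  \sum_(k | psi k == Some I_st)
     (\sum_(n | psi n == Some I_st) T k n * y (hset S_st k psi)
      + \sum_(n | psi n == None) T k n * closed_term x psi k n y
      - gam k * y psi)
  - \sum_(k | psi k == Some S_st)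
     (\sum_(n | psi n == Some I_st) T k n * y psi
      + \sum_(n | psi n == None) T k n * closed_term x psi k n y)
  + \sum_(k | psi k == Some R_st) gam k * y (hset I_st k psi).

Definition subarc (W : {set V}) : rel V := fun u v => [&& arc u v, u \in W & v \in W].
Definition undir (W : {set V}) : rel V :=
  fun u v => [&& arc u v || arc v u, u \in W & v \in W].
Definition uconnected (W : {set V}) : Prop :=
  forall u v, u \in W -> v \in W -> connect (undir W) u v.
Definition biconnected_und (W : {set V}) : Prop :=
  (3 <= #|W|)%N /\ uconnected W /\ forall w, w \in W -> uconnected (W :\ w).
Definition sub_block (W : {set V}) : Prop :=
  (exists2 r, r \in W & forall u, u \in W -> connect (subarc W) u r)
  /\ biconnected_und W.

End Model.

(* Main.v *)
Require Import Defs.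
From HB Require Import structures.
From mathcomp Require Import all_boot all_order all_algebra.
From mathcomp Require Import zify.
From Stdlib Require Import FunctionalExtensionality.
Import Order.TTheory GRing.Theory Num.Theory.

Section G.
Set Implicit Arguments. Unset Strict Implicit. Unset Printing Implicit Defensive.
Variables (R : realFieldType) (N : nat) (T : 'I_N -> 'I_N -> R).
Local Notation V := 'I_N.

Definition usym (a b : V) := Defs.arc T a b || Defs.arc T b a.
Lemma esym_sym : symmetric usym.
Proof. by move=> a b; rewrite /usym orbC. Qed.

Lemma undir_sym W : symmetric (undir T W).
Proof. by move=> a b; rewrite /undir orbC; case: (a \in W); case: (b \in W); rewrite ?andbF ?andbT. Qed.

Lemma path_uconn (W : {set V}) y p : path usym y p ->
  (forall v, (v \in W) = (v \in y :: p)) -> uconnected T W.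
Proof.
move=> hp hW.
have hp' : path (undir T W) y p.
  apply: (@sub_in_path _ (mem W) usym) hp.
    by move=> a b ha hb hab; rewrite /undir -/(usym a b) hab ha hb.
  by apply/allP=> v hv; move: hv; rewrite -hW; apply.
have cy : forall v, v \in W -> connect (undir T W) y v.
  by move=> v; rewrite hW => /(path_connect hp').
move=> u v hu hv; apply: (connect_trans _ (cy v hv)).
by rewrite (sym_connect_sym (@undir_sym W)); apply: cy.
Qed.

Lemma cycle_bic (c : seq V) : uniq c -> cycle usym c -> (3 <= size c)%N ->
  biconnected_und T [set v in c].
Proof.
move=> uc cc sc; split; first by rewrite cardsE; move/card_uniqP: uc => ->.
split.
  case: c uc cc sc => [//|y p] uc /= cc sc.
  apply: (@path_uconn _ y p); last by move=> v; rewrite inE.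
  by move: cc; rewrite rcons_path => /andP[].
move=> w; rewrite inE => /splitPr hw.
case: hw uc cc sc => p1 p2 uc cc sc.
have hr : rot (size p1) (p1 ++ w :: p2) = w :: p2 ++ p1 := rot_size_cat _ _.
have cc' : cycle usym (w :: p2 ++ p1) by rewrite -hr rot_cycle.
have uc' : uniq (w :: p2 ++ p1) by rewrite -hr rot_uniq.
have hm : forall v, (v \in p1 ++ w :: p2) = (v \in w :: p2 ++ p1).
  by move=> v; rewrite -hr mem_rot.
case E: (p2 ++ p1) cc' uc' => [|y q] cc' uc'.
  by move=> u v; rewrite !inE hm E !inE; case: eqP.
apply: (@path_uconn _ y q).
  by move: cc'; rewrite /= rcons_path => /andP[_ /andP[]].
move=> v; rewrite !inE hm E !inE.
case: (v =P w) => [->|_] //=.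
by move: uc'; rewrite /= inE negb_or => /andP[/andP[/negPf -> /negPf ->]].
Qed.

Lemma path_to_last (e : rel V) x p : path e x p ->
  forall v, v \in x :: p -> connect e v (last x p).
Proof.
elim: p x => [|y p IH] x /=.
  by move=> _ v; rewrite inE => /eqP ->.
move=> /andP[exy hp] v; rewrite inE => /orP[/eqP->|hv].
  by apply: connect_trans (connect1 exy) (IH _ hp _ (mem_head _ _)).
exact: IH.
Qed.

End G.

Section G2.
Set Implicit Arguments. Unset Strict Implicit. Unset Printing Implicit Defensive.
Variables (R : realFieldType) (N : nat) (T : 'I_N -> 'I_N -> R).
Local Notation V := 'I_N.

Definition eZ (k : V) : rel V := fun a b => [&& Defs.arc T a b, a != k & b != k].

Lemma INs_path k a X u : u \in INs T [set k] a X ->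
  exists l, [/\ path (eZ k) u l, last u l \in X, (size l <= a)%N & u != k].
Proof.
elim: a u => [|a IH] u /=.
  rewrite !inE => /andP[hk hX]; by exists [::].
rewrite !inE => /orP[/IH [l [h1 h2 h3 h4]]|/andP[hk /existsP[v /andP[hv huv]]]].
  by exists l; split => //; apply: leqW.
have [l [h1 h2 h3 h4]] := IH _ hv.
exists (v :: l); split => //=.
by rewrite h1 /eZ huv hk h4.
Qed.

Lemma path_neq k u l : path (eZ k) u l -> last u l != k -> all (fun v => v != k) (u :: l).
Proof.
elim: l u => [|y l IH] u /=; first by rewrite andbT.
move=> /andP[/and3P[_ h1 h2] hp] hl.
by rewrite h1 /=; apply: IH.
Qed.

Lemma config k n0 m c : forall u l1 l2, path (eZ k) u l1 -> last u l1 = n0 ->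
  path (eZ k) u l2 -> last u l2 = m -> (size l1 + size l2 <= c)%N ->
  exists u' l1' l2', [/\ path (eZ k) u' l1', last u' l1' = n0,
     path (eZ k) u' l2', last u' l2' = m & (size l1' + size l2' <= c)%N /\
     uniq (u' :: l1' ++ l2')].
Proof.
elim/ltn_ind: c => c IH u l1 l2 p1 e1 p2 e2 sc.
move: e1 e2; case: (shortenP p1) => l1' p1' u1 s1 e1.
case: (shortenP p2) => l2' p2' u2 s2 e2.
have z1 : (size l1' <= size l1)%N by apply: uniq_leq_size => //; case/andP: u1.
have z2 : (size l2' <= size l2)%N by apply: uniq_leq_size => //; case/andP: u2.
have sc' : (size l1' + size l2' <= c)%N by apply: leq_trans sc; apply: leq_add.
case H: (has (mem l1') l2').
  case/hasP: H => v hv2 hv1.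
  case/splitPr: hv1 p1' u1 e1 sc' => a1 b1 p1' u1 e1 sc'.
  case/splitPr: hv2 p2' u2 e2 sc' => a2 b2 p2' u2 e2 sc'.
  move: p1' p2'; rewrite !cat_path /= => /and3P[_ _ q1] /and3P[_ _ q2].
  move: e1 e2; rewrite !last_cat /= => e1 e2.
  have lt : (size b1 + size b2 < c)%N.
    apply: leq_trans sc'; rewrite !size_cat /=.
    lia.
  have [u' [l1'' [l2'' [h1 h2 h3 h4 [h5 h6]]]]] := IH _ lt v b1 b2 q1 e1 q2 e2 (leqnn _).
  exists u', l1'', l2''; split => //; split => //; apply: leq_trans h5 (ltnW lt).
exists u, l1', l2'; split => //; split => //.
rewrite /= cat_uniq mem_cat negb_or H.
by move: u1 u2 => /= /andP[-> ->] /andP[-> ->].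
Qed.

End G2.

Section G3.
Set Implicit Arguments. Unset Strict Implicit. Unset Printing Implicit Defensive.
Variables (R : realFieldType) (N : nat) (T : 'I_N -> 'I_N -> R).
Local Notation V := 'I_N.
Local Open Scope ring_scope.

Lemma key (n : nat) (Hmin2 : forall W : {set V}, sub_block T W -> (n <= #|W|)%N)
  x k m n0 : (x < n - 2)%N -> k != m -> Defs.arc T k m || Defs.arc T m k ->
  n0 != k -> n0 != m -> 0 < T k n0 -> fC T x [set n0] [set m] [set k].
Proof.
move=> hx hkm hakm hn0k hn0m hT.
apply/idPn; rewrite /fC.
have -> : ([set m] != set0) = true by apply/set0Pn; exists m; rewrite inE.
rewrite /= negb_forall => /existsP [a] /set0Pn [u]; rewrite inE => /andP[hu1 hu2].
have [l1 [p1 e1 s1 _]] := INs_path hu1.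
have [l2 [p2 e2 s2 _]] := INs_path hu2.
move: e1 e2; rewrite !inE => /eqP e1 /eqP e2.
have sz : (size l1 + size l2 <= x)%N by have := ltn_ord a; lia.
have [u' [l1' [l2' [p1' e1' p2' e2' [sz' uq]]]]] := config p1 e1 p2 e2 sz.
clear u l1 l2 p1 e1 p2 e2 sz s1 s2 hu1 hu2.
rename u' into u; rename l1' into l1; rename l2' into l2; rename p1' into p1; rename e1' into e1; rename p2' into p2; rename e2' into e2; rename sz' into sz.
set q := rev (belast u l1).
set c := k :: n0 :: q ++ l2.
have hqmem : forall v, (v \in n0 :: q) = (v \in u :: l1).
  by move=> v; rewrite [in RHS]lastI e1 mem_rcons !in_cons mem_rev.
have hqperm : perm_eq (n0 :: q) (u :: l1).
  rewrite [u :: l1]lastI e1 perm_sym perm_rcons perm_cons perm_sym.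
  by rewrite /q perm_rev.
have hlast : last n0 q = u.
  rewrite /q; case: l1 e1 {p1 uq hqmem hqperm q c sz} => [|y l] /= e1; first by rewrite e1.
  by rewrite rev_cons last_rcons.
have hpq : path (@usym _ _ T) n0 q.
  rewrite /q -e1 rev_path; apply: sub_path p1 => a' b' /and3P[h _ _].
  by rewrite /usym h orbT.
have p2s : path (@usym _ _ T) u l2.
  by apply: sub_path p2 => a' b' /and3P[h _ _]; rewrite /usym h.
have hcyc : cycle (@usym _ _ T) c.
  rewrite /c /= rcons_cat cat_path rcons_path hlast hpq p2s e2 /=.
  by rewrite /usym [Defs.arc T n0 k]/Defs.arc hT orbT /= orbC.
have hk1 : all (fun v => v != k) (u :: l1) by apply: path_neq p1 _; rewrite e1.
have hk2 : all (fun v => v != k) (u :: l2) by apply: path_neq p2 _; rewrite e2 eq_sym.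
have hcperm : perm_eq c (k :: u :: l1 ++ l2).
  by rewrite /c perm_cons; exact: (perm_cat hqperm (perm_refl l2)).
have nk1 : k \notin u :: l1 by apply/negP => h; move/allP: hk1 => /(_ k h); rewrite eqxx.
have nk2 : k \notin u :: l2 by apply/negP => h; move/allP: hk2 => /(_ k h); rewrite eqxx.
have huc : uniq c.
  rewrite (perm_uniq hcperm) cons_uniq uq andbT.
  move: nk1 nk2; rewrite !in_cons mem_cat !negb_or.
  by case: (k == u) => //= -> ->.
have hmem : forall v, (v \in c) = [|| v == k, v \in u :: l1 | v \in l2].
  by move=> v; rewrite /c in_cons -cat_cons mem_cat hqmem.
have hsize : size c = (size l1 + size l2).+2.
  by rewrite (perm_size hcperm) /= size_cat.
have h3 : (3 <= size c)%N.
  rewrite hsize; case: l1 l2 e1 e2 {p1 p2 uq hk1 hk2 nk1 nk2 hmem hqmem hqperm hlast hpq p2s hcyc hcperm huc hsize q c sz} => [|??] [|??] //= e1 e2.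
  by move: hn0m; rewrite -e1 -e2 eqxx.
set W := [set v in c].
have hW : sub_block T W.
  split; last exact: cycle_bic.
  have inW : forall v, (v \in W) = [|| v == k, v \in u :: l1 | v \in l2].
    by move=> v; rewrite inE hmem.
  have sub1 : forall l, (forall v, v \in u :: l -> v \in W) ->
      path (eZ T k) u l -> path (subarc T W) u l.
    move=> l hl; apply: (@sub_in_path _ (mem W)).
      by move=> a' b' ha hb /and3P[h _ _]; rewrite /subarc h ha hb.
    by apply/allP => v /hl.
  have pa1 : path (subarc T W) u l1.
    by apply: sub1 p1 => v hv; rewrite inW hv orbT.
  have pa2 : path (subarc T W) u l2.
    by apply: sub1 p2 => v; rewrite in_cons inW => /orP[/eqP->|->]; rewrite ?orbT // mem_head orbT.
  have kW : k \in W by rewrite inW eqxx.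
  have mW : m \in W by rewrite inW; move: (mem_last u l2); rewrite e2 in_cons => /orP[/eqP->|->]; rewrite ?orbT // mem_head orbT.
  have n0W : n0 \in W by rewrite inW -e1 mem_last orbT.
  have cn0k : connect (subarc T W) n0 k.
    by apply: connect1; rewrite /subarc /Defs.arc hT n0W kW.
  have c1 : forall v, v \in u :: l1 -> connect (subarc T W) v n0.
    by move=> v hv; rewrite -e1; apply: path_to_last pa1 _ hv.
  have c2 : forall v, v \in l2 -> connect (subarc T W) v m.
    by move=> v hv; rewrite -e2; apply: path_to_last pa2 _ _; rewrite in_cons hv orbT.
  case/orP: hakm => ha.
    exists m => // v; rewrite inW => /or3P[/eqP->|hv|hv].
    - by apply: connect1; rewrite /subarc ha kW mW.
    - apply: connect_trans (c1 _ hv) (connect_trans cn0k _).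
      by apply: connect1; rewrite /subarc ha kW mW.
    - exact: c2.
  exists k => // v; rewrite inW => /or3P[/eqP->|hv|hv].
  - exact: connect0.
  - exact: connect_trans (c1 _ hv) cn0k.
  - apply: connect_trans (c2 _ hv) _.
    by apply: connect1; rewrite /subarc ha kW mW.
have hc : #|W| = size c by rewrite /W cardsE; apply/card_uniqP.
move: (Hmin2 _ hW); rewrite hc hsize => h.
clear -h sz hx. lia.
Qed.

End G3.

Section G4.
Set Implicit Arguments. Unset Strict Implicit. Unset Printing Implicit Defensive.
Variables (R : realFieldType) (N : nat) (T : 'I_N -> 'I_N -> R).
Local Notation V := 'I_N.
Local Open Scope ring_scope.

Lemma supp_single X (i : V) : supp (single X i) = [set i].
Proof. by apply/setP => j; rewrite !inE ffunE; case: (j =P i). Qed.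

Lemma supp_hset X (k : V) psi : supp (hset X k psi) = k |: supp psi.
Proof. by apply/setP => j; rewrite !inE ffunE; case: (j =P k). Qed.

Lemma SI_single X (i : V) : X != R_st -> SI_state (single X i).
Proof.
move=> hX; apply/forallP => j; rewrite ffunE; case: (j =P i) => _; rewrite !inE //.
by case: X hX.
Qed.

Lemma SI_hset X (k : V) psi : X != R_st -> SI_state psi -> SI_state (hset X k psi).
Proof.
move=> hX /forallP h; apply/forallP => j; rewrite ffunE; case: (j =P k) => _; last exact: h.
by rewrite !inE; case: X hX.
Qed.

Lemma setU1_id (k : V) (A : {set V}) : k \in A -> k |: A = A.
Proof. by move=> h; apply/setUidPr; rewrite sub1set. Qed.

Definition good (psi : state N) : Prop := SI_state psi /\
  ((exists a, supp psi = [set a]) \/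
   exists a b, [/\ supp psi = [set a; b], a != b & Defs.arc T a b || Defs.arc T b a]).

Lemma good_card psi : good psi -> (#|supp psi| <= 2)%N.
Proof.
by move=> [_ [[a ->]|[a [b [-> _ _]]]]]; rewrite ?cards1 ?cards2 ?ltnS ?leq_b1.
Qed.

Variable n : nat.
Hypothesis Hmin2 : forall W : {set V}, sub_block T W -> (n <= #|W|)%N.

Lemma fC_val x psi k n' : (x < n - 2)%N -> good psi -> k \in supp psi ->
  n' \notin supp psi -> 0 < T k n' ->
  fC T x [set n'] (supp psi :\ k) [set k] = (#|supp psi| == 2%N).
Proof.
move=> hx [_ [[a ha]|[a [b [hab hne harc]]]]] hk hn hT.
  move: hk; rewrite ha cards1 inE => /eqP ->.
  by rewrite setDv /fC eqxx.
rewrite hab cards2 hne /=.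
have hn'k : n' != k by apply: contraNneq hn => ->.
move: hk hn hT hn'k; rewrite hab !inE => /orP[] /eqP -> hn hT hn'k; move: hn; rewrite negb_or => /andP[h1 h2].
  have -> : [set a; b] :\ a = [set b].
    by rewrite setU1K // inE.
  by rewrite eqxx; apply: (key Hmin2).
have -> : [set a; b] :\ b = [set a].
  by rewrite setUC setU1K // inE eq_sym.
rewrite eqxx; apply: (key Hmin2) => //; first by rewrite eq_sym.
by rewrite orbC.
Qed.

Lemma good_induced x psi phi : (x < n - 2)%N -> good psi -> induced T x psi phi -> good phi.
Proof.
move=> hx hg [hSI [->|[k [n' [hk hn hT ->]]]|[k [n' [hk hn hT]]]]] //.
  case: hg => _ hs; split; first exact: SI_hset.
  by rewrite supp_hset setU1_id // inE hk.
rewrite (fC_val hx hg hk hn hT).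
have hn'k : n' != k by apply: contraNneq hn => ->.
case: hg => _ hs.
case: ifP => h2.
  case=> [->|[->|->]].
  - split; first exact: SI_hset.
    by rewrite supp_hset setU1_id.
  - split; first by apply: SI_hset => //; apply: SI_single.
    right; exists n', k; split => //; first by rewrite /addI supp_hset supp_single.
    by rewrite /Defs.arc hT.
  - by split; [apply: SI_single | left; exists k; rewrite supp_single].
case: hs => [[a ha]|[a [b [hab hne _]]]]; last by move: h2; rewrite hab cards2 hne.
move=> ->; split; first by apply: SI_hset => //; apply: SI_hset.
right; exists n', k; split => //; last by rewrite /Defs.arc hT.
rewrite /addI !supp_hset ha.
  by move: hk; rewrite ha inE => /eqP ->; rewrite setUid.
Qed.

Lemma MC_good x psi : (x < n - 2)%N -> MC T x psi -> good psi.
Proof.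
move=> hx; elim => [i|i|psi' phi _ IH hi].
- by split; [apply: SI_single | left; exists i; apply: supp_single].
- by split; [apply: SI_single | left; exists i; apply: supp_single].
- exact: good_induced hi.
Qed.

Lemma induced_change x y psi phi : (x < n - 2)%N -> (y < n - 2)%N -> good psi ->
  induced T x psi phi -> induced T y psi phi.
Proof.
move=> hx hy hg [hSI [h|h|[k [n' [hk hn hT h]]]]]; split => //.
- by constructor 1.
- by constructor 2.
constructor 3; exists k, n'; split => //.
by rewrite (fC_val hy hg hk hn hT) -(fC_val hx hg hk hn hT).
Qed.

Lemma MC_change x y psi : (x < n - 2)%N -> (y < n - 2)%N -> MC T x psi -> MC T y psi.
Proof.
move=> hx hy; elim => [i|i|psi' phi hm IH hi].
- exact: MC_S.
- exact: MC_I.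
apply: MC_step IH _; apply: induced_change hi => //.
exact: MC_good hm.
Qed.

End G4.

Local Open Scope ring_scope.

Theorem mainTheorem13 (R : realFieldType) (N : nat) (T : 'I_N -> 'I_N -> R)
    (gam : 'I_N -> R)
    (HT0 : forall i j, 0 <= T i j) (HTii : forall i, T i i = 0)
    (Hgam : forall i, 0 <= gam i)
    (n : nat)
    (Hmin : (exists W : {set 'I_N}, sub_block T W /\ #|W| = n) /\
            (forall W : {set 'I_N}, sub_block T W -> (n <= #|W|)%N)) :
  forall x : nat, (x < n - 2)%N ->
    [/\ forall psi, MC T x psi -> (#|supp psi| <= 2)%N,
        forall psi, MC T x psi <-> MC T 0 psi
      & forall psi, MC T x psi -> closed_rhs T gam x psi = closed_rhs T gam 0 psi].
Proof.
case: Hmin => [[W0 [[_ [h3 _]] hW0]] Hmin2] x hx.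
have h0 : (0 < n - 2)%N by rewrite -hW0 subn_gt0.
split.
- by move=> psi /(MC_good Hmin2 hx) /good_card.
- by move=> psi; split; [apply: (MC_change Hmin2 hx h0) | apply: (MC_change Hmin2 h0 hx)].
move=> psi hm; have hg := MC_good Hmin2 hx hm.
apply: functional_extensionality => y.
have E : forall k, k \in supp psi ->
    \sum_(n' | psi n' == None) T k n' * closed_term T x psi k n' y =
    \sum_(n' | psi n' == None) T k n' * closed_term T 0 psi k n' y.
  move=> k hk; apply: eq_bigr => n' hn.
  have := HT0 k n'; rewrite le0r => /orP[/eqP->|hpos]; first by rewrite !mul0r.
  have hn' : n' \notin supp psi by rewrite inE negbK.
  by rewrite /closed_term (fC_val Hmin2 hx hg hk hn' hpos) (fC_val Hmin2 h0 hg hk hn' hpos).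
rewrite /closed_rhs; congr (_ - _ + _).
  by apply: eq_bigr => k /eqP hk; rewrite E // inE hk.
by apply: eq_bigr => k /eqP hk; rewrite E // inE hk.
Qed.
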